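(* Let $(\mathcal A,\phi)$ be a noncommutative probability space and $\mathcal F$ its free exchangeability system. For every noncrossing partition $\pi\in NC_n$ and all $X_1,\dots,X_n\in\mathcal A$, $$\phi^{\mathcal F}_\pi(X_1,\dots,X_n)=\prod_{B\in\pi}\phi\Big(\prod_{i\in B}X_i\Big),\qquad K^{\mathcal F}_\pi(X_1,\dots,X_n)=\prod_{B\in\pi}K^{\mathcal F}_{|B|}(X_i:i\in B),$$ where products and sequences within a block are taken in increasing order of the indices.
   Context: A noncommutative probability space is a pair $(\mathcal A,\phi)$ of a complex unital algebra $\mathcal A$ and a unital linear functional $\phi$. The free exchangeability system $\mathcal F$: $\mathcal U$ is the (unital, algebraic) free product of countably many copies $\mathcal A_k$, $k\in\mathbb N$, of $\mathcal A$, $\tilde\phi$ is the free product functional of copies of $\phi$ (characterized by $\tilde\phi(1)=1$, $\tilde\phi$ restricting to $\phi$ on each copy, and $\tilde\phi(a_1\cdots a_m)=0$ whenever $a_j\in\mathcal A_{k_j}$, $k_j\ne k_{j+1}$, $\tilde\phi(a_j)=0$), and $X\mapsto X^{(k)}$ is the inclusion of the $k$-th copy. For $X_1,\dots,X_n\in\mathcal A$ and a partition $\pi$ of $[n]$, $\phi^{\mathcal F}_\pi(X_1,\dots,X_n)=\tilde\phi(X_1^{(i_1)}\cdots X_n^{(i_n)})$ for any indices $i_1,\dots,i_n$ with $i_j=i_l\iff j,l$ in the same block of $\pi$. $K^{\mathcal F}_\pi=\sum_{\sigma\le\pi}\phi^{\mathcal F}_\sigma\,\mu(\sigma,\pi)$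 with $\mu$ the Möbius function of the set-partition lattice $\Pi_n$ under refinement, and $K^{\mathcal F}_m(Y_1,\dots,Y_m)=K^{\mathcal F}_{\hat1_m}(Y_1,\dots,Y_m)$ for the one-block partition. A partition $\pi$ is noncrossing if there are no $i<j<k<l$ with $i,k$ in one block and $j,l$ in a different block; $NC_n$ is the set of noncrossing partitions of $[n]$. *)

(* Defs.v *)
From HB Require Import structures.
From mathcomp Require Import all_boot all_order all_algebra.
From mathcomp Require Import reals complex.
Set Implicit Arguments.
Unset Strict Implicit.
Unset Printing Implicit Defensive.
Import Order.TTheory GRing.Theory Num.Theory.
Local Open Scope ring_scope.

Definition setpart (n : nat) :=
  {P : {set {set 'I_n}} | partition P [set: 'I_n]}.

Definition refines n (s t : {set {set 'I_n}}) : bool :=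
  [forall B in s, exists C in t, B \subset C].

Definition noncrossing n (P : {set {set 'I_n}}) : bool :=
  [forall B in P, forall C in P, (B != C) ==>
    [forall i : 'I_n, forall j : 'I_n, forall k : 'I_n, forall l : 'I_n,
      ~~ [&& (i < j)%N, (j < k)%N, (k < l)%N, i \in B, k \in B, j \in C & l \in C]]].

Definition zeta_mx (C : comUnitRingType) n : 'M[C]_#|{: setpart n}| :=
  \matrix_(i, j) (refines (val (enum_val i)) (val (enum_val j)))%:R.

Definition mobius (C : comUnitRingType) n (s t : setpart n) : C :=
  invmx (zeta_mx C n) (enum_rank s) (enum_rank t).

Definition one_block_set m : {set {set 'I_m}} :=
  if m is 0 then set0 else [set [set: 'I_m]].

Lemma one_block_partition m : partition (one_block_set m) [set: 'I_m].
Proof.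
case: m => [|m] /=.
  apply/and3P; split.
  - by apply/eqP/setP => -[].
  - by apply/trivIsetP => A B; rewrite inE.
  - by rewrite inE.
apply/and3P; split.
- by rewrite /cover big_set1.
- exact: trivIset1.
- rewrite inE eq_sym; apply/set0Pn; exists ord0; by rewrite inE.
Qed.

Definition one_block m : setpart m := exist (fun P : {set {set 'I_m}} => partition P [set: 'I_m]) (one_block_set m) (one_block_partition m).

(* These are exactly the properties that characterize the free product    *)
(* functional tilde-phi on the words in the copies A_k.                   *)

Record free_exch_system (C : fieldType) (A : algType C) (phi : {scalar A}) :=
  FreeExchSystem {
    fes_U : algType C;
    fes_psi : {scalar fes_U};
    fes_iota : nat -> {lrmorphism A -> fes_U};
    fes_psi1 : fes_psi 1 = 1;
    fes_restr : forall k a, fes_psi (fes_iota k a) = phi a;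
    fes_free : forall s : seq (nat * A),
      (0 < size s)%N ->
      sorted (fun p q => p.1 != q.1) s ->
      all (fun p => phi p.2 == 0) s ->
      fes_psi (\prod_(p <- s) fes_iota p.1 p.2) = 0
  }.

(* phi^F_pi(X_1..X_n) = tilde-phi(X_1^(i_1) ... X_n^(i_n)), with the
   canonical choice i_j := position of the block of j in enum pi
   (so i_j = i_l iff j, l lie in the same block of pi). *)
Definition phiF (C : fieldType) (A : algType C) (phi : {scalar A})
    (F : free_exch_system phi) n (P : {set {set 'I_n}}) (X : 'I_n -> A) : C :=
  fes_psi F (\prod_(j < n) fes_iota F (index (pblock P j) (enum P)) (X j)).

Definition KF (C : fieldType) (A : algType C) (phi : {scalar A})
    (F : free_exch_system phi) n (P : setpart n) (X : 'I_n -> A) : C :=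
  \sum_(s : setpart n | refines (val s) (val P))
     phiF F (val s) X * mobius C s P.

Definition KFm (C : fieldType) (A : algType C) (phi : {scalar A})
    (F : free_exch_system phi) m (Y : 'I_m -> A) : C :=
  KF F (one_block m) Y.

Definition restr_block (T : Type) n (B : {set 'I_n}) (X : 'I_n -> T)
  : 'I_#|B| -> T := fun j => X (enum_val j).
Arguments restr_block {T n} B X _.

(* Main.v *)
Require Import Defs.
From HB Require Import structures.
From mathcomp Require Import all_boot all_order all_algebra.
From mathcomp Require Import reals complex.
From mathcomp Require Import zify.

Module WordsM.
Set Implicit Arguments.
Unset Strict Implicit.
Unset Printing Implicit Defensive.
Import GRing.Theory.
Local Open Scope ring_scope.

Lemma sorted_catI (T : eqType) (r : rel T) a b : sorted r a -> sorted r b ->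
  (forall x0, a != [::] -> b != [::] -> r (last x0 a) (head x0 b)) -> sorted r (a ++ b).
Proof.
case: a => [|x a] //= Ha; case: b => [|y b] /=; first by rewrite cats0.
move=> Hb H; rewrite cat_path Ha /=; have := H x isT isT; rewrite /= => ->; exact: Hb.
Qed.

Definition ncseq (t : seq nat) := forall a b, a != b -> ~~ subseq [:: a; b; a; b] t.

Lemma ncseq_sub t t' : subseq t' t -> ncseq t -> ncseq t'.
Proof. by move=> st H a b /H; apply: contra => /subseq_trans; apply. Qed.

Lemma contig (T : eqType) (g : T -> nat) s : s != [::] -> ncseq (map g s) ->
  exists c s1 s2 s3, [/\ s = s1 ++ s2 ++ s3, s2 != [::], all (fun x => g x == c) s2,
                        c \notin map g s1 & c \notin map g s3].
Proof.
move: {2}(size s).+1 (ltnSn (size s)) => N.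
elim: N s => [|N IH] [|x r] //= HN _ Hnc.
have [xr|xr] := boolP (has (fun z => g z == g x) r); last first.
  exists (g x), [::], [:: x], r; split => //=; first by rewrite eqxx.
  by apply: contra xr => /mapP [z zr E]; apply/hasP; exists z => //; rewrite E.
move: HN Hnc; case/(split_find_nth x): xr => y m r' /eqP gy nh; rewrite cat_rcons => HN Hnc.
case: m nh HN Hnc => [|z m] nh HN Hnc.
  have [] := IH (y :: r') _ isT.
  - by rewrite /= in HN *; lia.
  - by apply: ncseq_sub Hnc; exact: (map_subseq g (subseq_cons (y :: r') x)).
  move=> c [s1 [s2 [s3 [E ne al n1 n3]]]].
  case: s1 E n1 => [|w s1] /= E n1.
    case: s2 E ne al => [|y' s2'] //= [<- E3] _ al.
    exists c, [::], [:: x, y & s2'], s3; split => //=.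
    - by rewrite E3.
    - by move: al; rewrite -gy => /andP[-> ->].
  case: E => Ew E; subst w.
  exists c, [:: x, y & s1], s2, s3; split => //=.
  - by rewrite E.
  - by move: n1; rewrite !in_cons -gy orbA orbb.
have [] := IH (z :: m) _ isT.
- by rewrite /= size_cat /= in HN *; lia.
- apply: ncseq_sub Hnc.
  have H : subseq (z :: m) (x :: (z :: m) ++ y :: r').
    exact: (subseq_trans (prefix_subseq _ (y :: r')) (subseq_cons _ x)).
  exact: (map_subseq g H).
move=> c [s1 [s2 [s3 [E ne al n1 n3]]]].
case: s2 E ne al => [|w s2] // E _ al.
have cw : g w = c by move: al => /= /andP[/eqP].
have wzm : w \in z :: m by rewrite E !mem_cat mem_head orbT.
have cx : c != g x.
  by rewrite -cw; apply: contra nh => /eqP E'; apply/hasP; exists w => //; rewrite E'.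
exists c, (x :: s1), (w :: s2), (s3 ++ y :: r'); split => //=.
- by have -> : z :: m ++ y :: r' = (z :: m) ++ y :: r' by []; rewrite E -!catA.
- by rewrite in_cons negb_or cx.
rewrite map_cat mem_cat negb_or n3 /= in_cons gy negb_or cx /=.
apply/negP => cr; have gxc : g x != c by rewrite eq_sym.
move: (Hnc _ _ gxc) => /negP; apply.
have H : subseq [:: g x; c; g x; c] ([:: g x] ++ map g (z :: m) ++ map g (y :: r')).
  apply: (@cat_subseq _ [:: g x] [:: c; g x; c]) => //.
  apply: (@cat_subseq _ [:: c] [:: g x; c]).
    by rewrite sub1seq -cw; apply: map_f.
  by rewrite /= gy eqxx sub1seq.
rewrite -map_cat in H; exact: H.
Qed.

Section Words.
Variables (C : fieldType) (A : algType C) (phi : {scalar A}).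
Hypothesis phi1 : phi 1 = 1.
Variable F : free_exch_system phi.

Local Notation psi := (fes_psi F).
Local Notation iota := (fes_iota F).

Definition W (s : seq (nat * A)) : fes_U F := \prod_(p <- s) iota p.1 p.2.

Lemma W_nil : W [::] = 1. Proof. by rewrite /W big_nil. Qed.
Lemma W_cat s1 s2 : W (s1 ++ s2) = W s1 * W s2. Proof. by rewrite /W big_cat. Qed.
Lemma W_cons x s : W (x :: s) = iota x.1 x.2 * W s. Proof. by rewrite /W big_cons. Qed.

Definition cen (a : A) := a - phi a *: 1.
Lemma phi_cen a : phi (cen a) = 0.
Proof. by rewrite /cen linearB linearZ /= phi1 mulr1 subrr. Qed.

Lemma psi_center s1 k a s2 :
  psi (W (s1 ++ (k, a) :: s2)) = phi a * psi (W (s1 ++ s2)) + psi (W (s1 ++ (k, cen a) :: s2)).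
Proof.
rewrite !W_cat !W_cons /= /cen linearB linearZ /= rmorph1.
rewrite mulrBl mulrBr -scalerAl mul1r -scalerAr linearB linearZ /=.
by rewrite addrC subrK.
Qed.

Lemma W_merge0 k a b s2 :
  W ((k, a) :: (k, b) :: s2) = W ((k, a * b) :: s2).
Proof. by rewrite !W_cons /= rmorphM !mulrA. Qed.

Lemma W_merge s1 k a b s2 :
  W (s1 ++ (k, a) :: (k, b) :: s2) = W (s1 ++ (k, a * b) :: s2).
Proof. by rewrite !W_cat !W_cons /= rmorphM !mulrA. Qed.

Definition cz (p : nat * A) := phi p.2 == 0.
Definition msr (s : seq (nat * A)) := (2 * size s + count (predC cz) s)%N.
Definition labs (s : seq (nat * A)) := map fst s.
Definition rl (f : nat -> nat) (s : seq (nat * A)) := map (fun p => (f p.1, p.2)) s.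
Definition nadj := (fun p q : nat * A => p.1 != q.1).

Lemma split_nc s : ~~ all cz s ->
  exists s1 k a s2, s = s1 ++ (k, a) :: s2 /\ phi a != 0.
Proof.
case/allPn => -[k a] ka nz; case/splitPr: ka => s1 s2.
by exists s1, k, a, s2.
Qed.

Lemma split_adj s : ~~ sorted nadj s -> exists s1 k a b s2, s = s1 ++ (k, a) :: (k, b) :: s2.
Proof.
elim: s => [|[k a] s IH] //=; case: s IH => [|[k' b] s] IH //=.
rewrite negb_and negbK; case/orP.
  by move/eqP => /= <-; exists [::], k, a, b, s.
move/IH => [s1 [k1 [a1 [b1 [s2 ->]]]]].
by exists ((k, a) :: s1), k1, a1, b1, s2.
Qed.


Lemma sub_labs_rm s1 x s2 : {subset labs (s1 ++ s2) <= labs (s1 ++ x :: s2)}.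
Proof.
by move=> y; rewrite /labs !map_cat !mem_cat /= in_cons => /orP[]->; rewrite ?orbT.
Qed.

Lemma labs_chg s1 k a b s2 : labs (s1 ++ (k, b) :: s2) = labs (s1 ++ (k, a) :: s2).
Proof. by rewrite /labs !map_cat. Qed.

Lemma sub_labs_mg s1 k a b c s2 :
  {subset labs (s1 ++ (k, c) :: s2) <= labs (s1 ++ (k, a) :: (k, b) :: s2)}.
Proof.
by move=> y; rewrite /labs !map_cat !mem_cat /= !in_cons => /orP[->|/orP[->|->]]; rewrite ?orbT.
Qed.

Ltac labs_tac := let y := fresh "y" in move=> y; rewrite /labs !map_cat !mem_cat /= ?in_cons;
  do ![case: (_ \in _) | case: (_ == _)] => //.

Lemma factor (f : nat -> nat) w1 u w2 :
  {in labs u &, injective f} ->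
  (forall k, k \in labs u -> k \notin labs (w1 ++ w2)) ->
  psi (W (w1 ++ u ++ w2)) = psi (W (rl f u)) * psi (W (w1 ++ w2)).
Proof.
move: {2}(msr (w1 ++ u ++ w2)).+1 (ltnSn (msr (w1 ++ u ++ w2))) => N.
elim: N w1 u w2 => [//|N IH] w1 u w2 HN Hinj Hdis.
have subI (u' : seq (nat * A)) : {subset labs u' <= labs u} -> {in labs u' &, injective f}.
  by move=> s; apply: sub_in2 Hinj.
have subD (u' w1' w2' : seq (nat * A)) : {subset labs u' <= labs u} ->
    {subset labs (w1' ++ w2') <= labs (w1 ++ w2)} ->
    forall k, k \in labs u' -> k \notin labs (w1' ++ w2').
  by move=> s1 s2 k /s1 /Hdis; apply: contra; apply: s2.
have [cu|/split_nc [u1 [k [a [u2 [Eu nz]]]]]] := boolP (all cz u); last first.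
  subst u.
  have E b : w1 ++ (u1 ++ (k, b) :: u2) ++ w2 = (w1 ++ u1) ++ (k, b) :: (u2 ++ w2).
    by rewrite -!catA.
  rewrite E psi_center -E.
  have -> : (w1 ++ u1) ++ u2 ++ w2 = w1 ++ (u1 ++ u2) ++ w2 by rewrite -!catA.
  rewrite (IH w1 (u1 ++ u2) w2) ?(IH w1 (u1 ++ (k, cen a) :: u2) w2).
  - by rewrite /rl !map_cat /= (psi_center _ (f k) a) mulrDl mulrA.
  - by rewrite /msr !size_cat !count_cat /= /cz ?phi_cen ?eqxx ?nz /= in HN *; lia.
  - by rewrite (labs_chg u1 k a).
  - by rewrite (labs_chg u1 k a).
  - by rewrite /msr !size_cat !count_cat /= /cz ?phi_cen ?eqxx ?nz /= in HN *; lia.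
  - by apply: subI; labs_tac.
  - by apply: subD; labs_tac.
have [c1|/split_nc [a1 [k [a [a2 [Ew nz]]]]]] := boolP (all cz w1); last first.
  subst w1.
  have E b t : (a1 ++ (k, b) :: a2) ++ t = a1 ++ (k, b) :: (a2 ++ t) by rewrite -catA.
  rewrite !E (psi_center a1 k a (a2 ++ u ++ w2)) (psi_center a1 k a (a2 ++ w2)) -!E.
  have -> : a1 ++ a2 ++ u ++ w2 = (a1 ++ a2) ++ u ++ w2 by rewrite catA.
  have -> : a1 ++ a2 ++ w2 = (a1 ++ a2) ++ w2 by rewrite catA.
  rewrite (IH (a1 ++ a2) u w2) ?(IH (a1 ++ (k, cen a) :: a2) u w2) //.
  - by rewrite mulrDr mulrCA.
  - by rewrite /msr !size_cat !count_cat /= /cz ?phi_cen ?eqxx ?nz /= in HN *; lia.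
  - by apply: subD => //; labs_tac.
  - by rewrite /msr !size_cat !count_cat /= /cz ?phi_cen ?eqxx ?nz /= in HN *; lia.
  - by apply: subD => //; labs_tac.
have [c2|/split_nc [a1 [k [a [a2 [Ew nz]]]]]] := boolP (all cz w2); last first.
  subst w2.
  have E b t : t ++ a1 ++ (k, b) :: a2 = (t ++ a1) ++ (k, b) :: a2 by rewrite catA.
  rewrite !catA (psi_center ((w1 ++ u) ++ a1) k a a2) (psi_center (w1 ++ a1) k a a2) -!catA.
  rewrite (IH w1 u (a1 ++ a2)) ?(IH w1 u (a1 ++ (k, cen a) :: a2)) //.
  - by rewrite mulrDr mulrCA.
  - by rewrite /msr !size_cat !count_cat /= /cz ?phi_cen ?eqxx ?nz /= in HN *; lia.
  - by apply: subD => //; labs_tac.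
  - by rewrite /msr !size_cat !count_cat /= /cz ?phi_cen ?eqxx ?nz /= in HN *; lia.
  - by apply: subD => //; labs_tac.
have [su|/split_adj [u1 [k [a [b [u2 Eu]]]]]] := boolP (sorted nadj u); last first.
  subst u.
  move: cu; rewrite all_cat /= => /and4P[cu1 ca cb cu2].
  have -> : W (w1 ++ (u1 ++ (k, a) :: (k, b) :: u2) ++ w2) =
            W (w1 ++ (u1 ++ (k, a * b) :: u2) ++ w2) by rewrite !W_cat W_merge0.
  have -> : W (rl f (u1 ++ (k, a) :: (k, b) :: u2)) = W (rl f (u1 ++ (k, a * b) :: u2)).
    by rewrite /rl !map_cat !W_cat /= W_merge0.
  rewrite IH //.
  - by rewrite /msr !size_cat !count_cat /= /cz (eqP ca) (eqP cb) /= in HN *; lia.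
  - by apply: subI; labs_tac.
  - by apply: subD; labs_tac.
have [s1|/split_adj [a1 [k [a [b [a2 Ew]]]]]] := boolP (sorted nadj w1); last first.
  subst w1.
  move: c1; rewrite all_cat /= => /and4P[cu1 ca cb cu2].
  have -> : W ((a1 ++ (k, a) :: (k, b) :: a2) ++ u ++ w2) =
            W ((a1 ++ (k, a * b) :: a2) ++ u ++ w2) by rewrite !W_cat W_merge0.
  have -> : W ((a1 ++ (k, a) :: (k, b) :: a2) ++ w2) =
            W ((a1 ++ (k, a * b) :: a2) ++ w2) by rewrite !W_cat W_merge0.
  rewrite IH //.
  - by rewrite /msr !size_cat !count_cat /= /cz (eqP ca) (eqP cb) /= in HN *; lia.
  - by apply: subD => //; labs_tac.
have [s2|/split_adj [a1 [k [a [b [a2 Ew]]]]]] := boolP (sorted nadj w2); last first.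
  subst w2.
  move: c2; rewrite all_cat /= => /and4P[cu1 ca cb cu2].
  have -> : W (w1 ++ u ++ (a1 ++ (k, a) :: (k, b) :: a2)) =
            W (w1 ++ u ++ (a1 ++ (k, a * b) :: a2)) by rewrite !W_cat W_merge0.
  have -> : W (w1 ++ (a1 ++ (k, a) :: (k, b) :: a2)) =
            W (w1 ++ (a1 ++ (k, a * b) :: a2)) by rewrite !W_cat W_merge0.
  rewrite IH //.
  - by rewrite /msr !size_cat !count_cat /= /cz (eqP ca) (eqP cb) /= in HN *; lia.
  - by apply: subD => //; labs_tac.
case: u Hinj Hdis cu su {HN subI subD} => [|x u'] Hinj Hdis cu su.
  by rewrite /= W_nil fes_psi1 mul1r.
have Z1 : psi (W (rl f (x :: u'))) = 0.
  apply: fes_free => //.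
    rewrite /rl sorted_map.
    have Hall : all [pred p : nat * A | p.1 \in labs (x :: u')] (x :: u').
      by apply/allP => p pu; exact: (map_f fst pu).
    apply: (sub_in_sorted _ Hall su) => p q pu qu /=.
    by apply: contra => /eqP /Hinj -> //.
  by rewrite /rl all_map.
rewrite Z1 mul0r; apply: fes_free.
- by rewrite !size_cat /= addnS.
- apply: sorted_catI => //.
    apply: sorted_catI => // x0 _; case Ew: w2 => [|z w2'] // _ /=.
    apply/negP => /eqP E; move: (Hdis (last x u').1); rewrite Ew.
    rewrite /labs map_cat mem_cat /= E mem_head orbT /=.
    by rewrite -E => /(_ (map_f fst (mem_last x u'))).
  move=> x0; case Ew: w1 => [|z w1'] // _ _ /=.
  apply/negP => /eqP E; move: (Hdis x.1); rewrite Ew.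
  rewrite /labs map_cat mem_cat /= mem_head -E.
  by rewrite (map_f fst (mem_last z w1')) => /(_ isT).
- by rewrite !all_cat c1 cu c2.
Qed.

Lemma rl_id u : rl id u = u.
Proof. by rewrite /rl; elim: u => //= -[k a] u ->. Qed.

Lemma factor0 w1 u w2 :
  (forall k, k \in labs u -> k \notin labs (w1 ++ w2)) ->
  psi (W (w1 ++ u ++ w2)) = psi (W u) * psi (W (w1 ++ w2)).
Proof. by move=> H; rewrite (@factor id) ?rl_id // => x y _ _. Qed.

Lemma relabel f u : {in labs u &, injective f} -> psi (W u) = psi (W (rl f u)).
Proof.
by move=> H; have := @factor f [::] u [::] H; rewrite /= cats0 W_nil fes_psi1 mulr1; apply.
Qed.

Lemma pattern_lem (T : eqType) (e : seq T) (l1 l2 : T -> nat) (Y : T -> A) :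
  {in e &, forall j k, (l1 j == l1 k) = (l2 j == l2 k)} ->
  psi (W [seq (l1 j, Y j) | j <- e]) = psi (W [seq (l2 j, Y j) | j <- e]).
Proof.
case: e => [//|j0 e'] H.
set e := j0 :: e' in H *.
pose f x := l2 (nth j0 e (find (fun j => l1 j == x) e)).
have fE j : j \in e -> f (l1 j) = l2 j.
  move=> je; rewrite /f.
  have hs : has (fun j' => l1 j' == l1 j) e by apply/hasP; exists j.
  have := nth_find j0 hs; set j' := nth _ _ _ => /eqP Ej.
  have j'e : j' \in e by apply: mem_nth; rewrite -has_find.
  by apply/eqP; rewrite -H // Ej.
rewrite (relabel (f := f)).
  rewrite /rl -map_comp; congr (fes_psi F (W _)); apply/eq_in_map => j je; by rewrite /= fE.
move=> x y /mapP [p /mapP [j je ->] ->] /mapP [q /mapP [k ke ->] ->] /=.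
by rewrite !fE // => /eqP; rewrite -H // => /eqP.
Qed.

Definition dr (p : (nat * nat) * A) : nat * A := (p.1.1, p.2).
Definition grp (p : (nat * nat) * A) := p.1.2.

Lemma groups (s : seq ((nat * nat) * A)) (cs : seq nat) :
  {in s &, forall p q, p.1.1 = q.1.1 -> p.1.2 = q.1.2} ->
  ncseq (map grp s) -> uniq cs -> {subset map grp s <= cs} ->
  psi (W (map dr s)) = \prod_(c <- cs) psi (W (map dr [seq p <- s | grp p == c])).
Proof.
move: {2}(size s).+1 (ltnSn (size s)) => N.
elim: N s => [//|N IH] s HN Hlg Hnc Hu Hcs.
case: (altP (s =P [::])) => [->|sne].
  by rewrite /= W_nil fes_psi1 big1_seq // => c _; rewrite W_nil fes_psi1.
have [c0 [s1 [s2 [s3 [E ne al n1 n3]]]]] := contig sne Hnc.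
have fnil t : c0 \notin map grp t -> [seq p <- t | grp p == c0] = [::].
  move=> nt; rewrite -(filter_pred0 t); apply: eq_in_filter => p pt /=.
  by apply: negbTE; apply: contra nt => /eqP <-; apply: map_f.
have f2 : [seq p <- s2 | grp p == c0] = s2 by apply/all_filterP.
case: s2 E ne al f2 => [//|w s2] E _ al f2.
have c0cs : c0 \in cs by apply: Hcs; rewrite E map_cat mem_cat /= in_cons (eqP (allP al w (mem_head _ _))) eqxx orbT.
have fs : [seq p <- s | grp p == c0] = w :: s2 by rewrite E !filter_cat (fnil s1) // (fnil s3) // f2 cats0.
rewrite (bigD1_seq c0) // fs {1}E.
rewrite !map_cat factor0; last first.
  move=> k /mapP [pp /mapP [p ps ->] ->] /=; apply/negP => /mapP [qq].
  rewrite -map_cat => /mapP [q qs ->] /= Epq.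
  have /Hlg Hg : p \in s by rewrite E !mem_cat ps orbT.
  have qs' : q \in s by move: qs; rewrite E !mem_cat => /orP [->|->]; rewrite ?orbT.
  move: (Hg q qs' Epq); rewrite -/(grp p) -/(grp q) (eqP (allP al p ps)) => Eg.
  move: qs; rewrite mem_cat => /orP [] /(map_f grp); rewrite -Eg; by [rewrite (negbTE n1) | rewrite (negbTE n3)].
rewrite -map_cat (IH (s1 ++ s3)) //.
- rewrite (bigD1_seq c0) //= filter_cat fnil // fnil // /= W_nil fes_psi1 mul1r.
  congr (_ * _); apply: eq_bigr => c cc0; rewrite E !filter_cat.
  suff -> : [seq p <- w :: s2 | grp p == c] = [::] by [].
  rewrite -(filter_pred0 (w :: s2)); apply: eq_in_filter => p pt /=.
  by rewrite (eqP (allP al p pt)) eq_sym (negbTE cc0).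
- by move: HN; rewrite E !size_cat /=; lia.
- by move=> p q ps qs; apply: Hlg; rewrite E !mem_cat; [move: ps | move: qs]; rewrite mem_cat => /orP[]->; rewrite ?orbT.
- apply: ncseq_sub Hnc; rewrite E; apply: map_subseq.
  exact: cat_subseq (subseq_refl s1) (suffix_subseq _ s3).
- by move=> c; rewrite map_cat mem_cat => /orP [] cm; apply: Hcs; rewrite E !map_cat !mem_cat cm ?orbT.
Qed.

End Words.

End WordsM.
Import WordsM.

Module PartsM.
Set Implicit Arguments.
Unset Strict Implicit.
Unset Printing Implicit Defensive.

Section Parts.
Variable n : nat.
Local Notation T := 'I_n.
Implicit Types (P Q S : {set {set T}}) (B C D : {set T}).

Lemma refinesP S Q : reflect (forall C, C \in S -> exists2 D, D \in Q & C \subset D) (refines S Q).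
Proof.
apply: (iffP forall_inP) => H C /H; first by move/exists_inP.
by move=> H'; apply/exists_inP.
Qed.

Lemma blk_uniq P D B B' x : partition P D -> B \in P -> B' \in P -> x \in B -> x \in B' -> B = B'.
Proof.
move=> pP BP B'P xB xB'; have tP := partition_trivIset pP.
by rewrite -(def_pblock tP BP xB) (def_pblock tP B'P xB').
Qed.

Lemma refines_refl S : refines S S.
Proof. by apply/refinesP => C CS; exists C. Qed.

Lemma refines_trans S1 S2 S3 : partition S1 setT -> refines S1 S2 -> refines S2 S3 -> refines S1 S3.
Proof.
move=> _ /refinesP H12 /refinesP H23; apply/refinesP => C /H12 [D /H23 [E ES DE] CD].
by exists E => //; apply: subset_trans CD DE.
Qed.

Definition rst S B := [set C in S | C \subset B].

Lemma mem_rst S B C : (C \in rst S B) = (C \in S) && (C \subset B).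
Proof. by rewrite inE. Qed.

Lemma nonempty_blk S D C : partition S D -> C \in S -> exists x, x \in C.
Proof.
move=> pS CS; have /set0Pn [x xC] := partition_neq0 pS CS; by exists x.
Qed.

Lemma rst_partition P S B : partition P setT -> partition S setT -> refines S P -> B \in P ->
  partition (rst S B) B.
Proof.
move=> pP pS /refinesP SP BP; apply/and3P; split.
- apply/eqP/setP => x; apply/bigcupP/idP => [[C]|xB].
    by rewrite mem_rst => /andP[_ /subsetP]; apply.
  have xS : x \in cover S by rewrite (cover_partition pS).
  exists (pblock S x); last by rewrite mem_pblock.
  rewrite mem_rst pblock_mem //=.
  have [D DP CD] := SP _ (pblock_mem xS).
  have xD : x \in D by apply: (subsetP CD); rewrite mem_pblock.
  by rewrite -(blk_uniq pP BP DP xB xD) in CD.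
- by apply: trivIsetS (partition_trivIset pS); apply/subsetP => C; rewrite mem_rst => /andP[].
- by rewrite mem_rst (partition0 pS).
Qed.

Lemma pblock_rst P S B x : partition P setT -> partition S setT -> refines S P -> B \in P ->
  x \in B -> pblock (rst S B) x = pblock S x.
Proof.
move=> pP pS SP BP xB; have pR := rst_partition pP pS SP BP.
have xS : x \in cover S by rewrite (cover_partition pS).
apply: def_pblock; first exact: partition_trivIset pR.
  rewrite mem_rst pblock_mem //=.
  move/refinesP: SP => /(_ _ (pblock_mem xS)) [D DP CD].
  have xD : x \in D by apply: (subsetP CD); rewrite mem_pblock.
  by rewrite -(blk_uniq pP BP DP xB xD) in CD.
by rewrite mem_pblock.
Qed.

Lemma refines_rst P S1 S2 : partition P setT -> partition S1 setT -> partition S2 setT ->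
  refines S1 P -> refines S2 P ->
  refines S1 S2 = [forall B in P, refines (rst S1 B) (rst S2 B)].
Proof.
move=> pP p1 p2 r1 r2; apply/idP/forall_inP => [/refinesP H B BP|H].
  apply/refinesP => C; rewrite mem_rst => /andP[CS CB].
  have [D DS CD] := H _ CS; exists D => //.
  rewrite mem_rst DS /=.
  have [E EP DE] := (refinesP _ _ r2) _ DS.
  have [x xC] := nonempty_blk p1 CS.
  by rewrite (blk_uniq pP BP EP (subsetP CB _ xC) (subsetP (subset_trans CD DE) _ xC)).
apply/refinesP => C CS; have [B BP CB] := (refinesP _ _ r1) _ CS.
have := (refinesP _ _ (H B BP)) C; rewrite mem_rst CS CB => /(_ isT) [D].
by rewrite mem_rst => /andP[DS _] CD; exists D.
Qed.

Lemma eq_rst P S : partition P setT -> partition S setT -> refines S P ->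
  (S == P) = [forall B in P, rst S B == [set B]].
Proof.
move=> pP pS SP; apply/eqP/forall_inP => [->|H].
  move=> B BP; apply/eqP/setP => C; rewrite mem_rst in_set1.
  apply/andP/eqP => [[CP CB]|->]; last by rewrite BP subxx.
  have [x xC] := nonempty_blk pP CP.
  by apply: (blk_uniq pP CP BP xC (subsetP CB _ xC)).
apply/setP => C; apply/idP/idP => [CS|CP].
  have [B BP CB] := (refinesP _ _ SP) _ CS.
  by move: (H B BP) => /eqP /setP /(_ C); rewrite mem_rst CS CB in_set1 => /esym /eqP ->.
by move: (H C CP) => /eqP /setP /(_ C); rewrite mem_rst in_set1 eqxx => /andP[].
Qed.

End Parts.

Section Relabel.
Variables (n : nat) (B : {set 'I_n}).
Definition ev (j : 'I_#|B|) : 'I_n := enum_val j.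
Implicit Types (C : {set 'I_n}) (D : {set 'I_#|B|}) (Q : {set {set 'I_n}}) (S : {set {set 'I_#|B|}}).

Lemma restr_blockE (U : Type) (X : 'I_n -> U) j : restr_block B X j = X (ev j).
Proof. by []. Qed.

Lemma ev_inj : injective ev. Proof. exact: enum_val_inj. Qed.
Lemma evP j : ev j \in B. Proof. exact: enum_valP. Qed.
Lemma ev_onto x : x \in B -> exists j, ev j = x.
Proof. by move=> xB; exists (enum_rank_in xB x); rewrite /ev enum_rankK_in. Qed.

Lemma ev_imset_preim C : C \subset B -> ev @: (ev @^-1: C) = C.
Proof.
move=> CB; apply/setP => x; apply/imsetP/idP => [[j]|xC].
  by rewrite inE => jC ->.
have [j ej] := ev_onto (subsetP CB _ xC); exists j => //; by rewrite inE ej.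
Qed.

Lemma ev_preim_imset D : ev @^-1: (ev @: D) = D.
Proof. by apply/setP => j; rewrite inE mem_imset //; exact: ev_inj. Qed.

Lemma ev_imsetT : ev @: setT = B.
Proof.
apply/setP => x; apply/imsetP/idP => [[j _ ->]|/ev_onto [j <-]]; first exact: evP.
by exists j.
Qed.


Lemma enum_ev : [seq ev j | j <- enum 'I_#|B|] = enum B.
Proof.
case: (pickP (mem B)) => [x0 x0B|none].
  rewrite (eq_map (fun j => enum_val_nth x0 j)).
  have -> : (fun j : 'I_#|B| => nth x0 (enum B) j) = nth x0 (enum B) \o val by [].
  by rewrite map_comp val_enum_ord cardE -/(mkseq _ _) mkseq_nth.
have B0 : #|B| = 0 by apply: eq_card0 => x; apply: none.
have -> : enum B = [::] by apply/nilP; rewrite /nilp -cardE B0.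
by apply/nilP; rewrite /nilp size_map size_enum_ord B0.
Qed.

Definition relab Q : {set {set 'I_#|B|}} := [set ev @^-1: C | C : {set 'I_n} in Q].
Definition unrel S : {set {set 'I_n}} := [set ev @: D | D : {set 'I_#|B|} in S].

Lemma unrel_rel Q : {in Q, forall C : {set 'I_n}, C \subset B} -> unrel (relab Q) = Q.
Proof.
move=> QB; rewrite /unrel /relab -imset_comp; apply/setP => C; apply/imsetP/idP.
  by move=> [C' C'Q ->] /=; rewrite ev_imset_preim // QB.
by move=> CQ; exists C => //=; rewrite ev_imset_preim // QB.
Qed.

Lemma rel_unrel S : relab (unrel S) = S.
Proof.
rewrite /unrel /relab -imset_comp; apply/setP => D; apply/imsetP/idP.
  by move=> [D' D'S ->] /=; rewrite ev_preim_imset.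
by move=> DS; exists D => //=; rewrite ev_preim_imset.
Qed.

Lemma unrel_partition S : partition S setT -> partition (unrel S) B.
Proof. by have := imset_partition S setT ev_inj; rewrite ev_imsetT => ->. Qed.

Lemma partS Q : partition Q B -> {in Q, forall C : {set 'I_n}, C \subset B}.
Proof. by move=> pQ C; apply: partitionS pQ. Qed.

Lemma rel_partition Q : partition Q B -> partition (relab Q) setT.
Proof.
move=> pQ; rewrite -(imset_partition (relab Q) setT ev_inj) ev_imsetT.
by rewrite -/(unrel (relab Q)) unrel_rel //; apply: partS.
Qed.

Lemma refines_rel Q1 Q2 : {in Q1, forall C : {set 'I_n}, C \subset B} -> {in Q2, forall C : {set 'I_n}, C \subset B} ->
  refines (relab Q1) (relab Q2) = refines Q1 Q2.
Proof.
move=> H1 H2; apply/refinesP/refinesP => H C CQ.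
  have [E /imsetP [D DQ ->] CD] := H _ (imset_f _ CQ).
  exists D => //; rewrite -(ev_imset_preim (H1 _ CQ)) -(ev_imset_preim (H2 _ DQ)).
  exact: imsetS.
move: CQ => /imsetP [C' C'Q ->]; have [D DQ CD] := H _ C'Q.
by exists (ev @^-1: D); [apply: imset_f | apply: preimsetS].
Qed.

Lemma rel_one Q : {in Q, forall C : {set 'I_n}, C \subset B} -> (relab Q == [set setT]) = (Q == [set B]).
Proof.
move=> H; apply/eqP/eqP => [E|->].
  by rewrite -(unrel_rel H) E /unrel imset_set1 ev_imsetT.
rewrite /relab imset_set1; congr [set _]; apply/setP => j; rewrite !inE; exact: evP.
Qed.

Lemma pblock_rel Q j : partition Q B -> pblock (relab Q) j = ev @^-1: pblock Q (ev j).
Proof.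
move=> pQ; have pR := rel_partition pQ.
have evQ : ev j \in cover Q by rewrite (cover_partition pQ) evP.
apply: def_pblock; first exact: partition_trivIset pR.
  by apply: imset_f; apply: pblock_mem.
by rewrite inE mem_pblock.
Qed.

End Relabel.

Definition tosp m (S : {set {set 'I_m}}) : setpart m := insubd (one_block m) S.
Lemma tospK m (S : {set {set 'I_m}}) : partition S setT -> val (tosp S) = S.
Proof. by move=> pS; rewrite /tosp insubdK. Qed.
Lemma tosp_val m (s : setpart m) : tosp (val s) = s.
Proof. exact: valKd. Qed.

Section Glue.
Variables (n : nat) (P : {set {set 'I_n}}).
Hypothesis pP : partition P setT.
Local Notation fT := {ffun {set 'I_n} -> {set {set 'I_n}}}.

Definition hfam (S : {set {set 'I_n}}) : fT := [ffun B => if B \in P then rst S B else set0].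
Definition glue (f : fT) : {set {set 'I_n}} := \bigcup_(B in P) f B.
Local Notation PF := (pfamily set0 (mem P) (fun B (Q : {set {set 'I_n}}) => partition Q B)).

Lemma pfam_out (f : fT) B : f \in PF -> B \notin P -> f B = set0.
Proof.
case/pfamilyP => /subsetP sup _ BP; apply/eqP; apply: contraR BP => nz.
exact: sup.
Qed.

Lemma pfam_in (f : fT) B : f \in PF -> B \in P -> partition (f B) B.
Proof. by case/pfamilyP => _ H /H. Qed.

Lemma glue_partition (f : fT) : f \in PF -> partition (glue f) setT.
Proof.
move=> fF; apply/and3P; split.
- apply/eqP/setP => x; rewrite inE; apply/bigcupP.
  have xP : x \in cover P by rewrite (cover_partition pP).
  set B := pblock P x; have BP : B \in P by apply: pblock_mem.
  have pf := pfam_in fF BP.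
  have : x \in cover (f B) by rewrite (cover_partition pf) mem_pblock.
  case/bigcupP => C Cf xC; exists C => //; apply/bigcupP; by exists B.
- apply/trivIsetP => C1 C2 /bigcupP [B1 B1P C1f] /bigcupP [B2 B2P C2f] neq.
  have [E|nB] := eqVneq B1 B2.
    subst B2; by move/trivIsetP: (partition_trivIset (pfam_in fF B1P)); apply.
  apply: (disjointW (partitionS (pfam_in fF B1P) C1f) (partitionS (pfam_in fF B2P) C2f)).
  by move/trivIsetP: (partition_trivIset pP); apply.
- by apply/bigcupP => -[B BP]; rewrite (partition0 (pfam_in fF BP)).
Qed.

Lemma rst_glue (f : fT) B : f \in PF -> B \in P -> rst (glue f) B = f B.
Proof.
move=> fF BP; apply/setP => C; rewrite mem_rst; apply/andP/idP => [[/bigcupP [B' B'P Cf] CB]|Cf].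
  have [x xC] := nonempty_blk (pfam_in fF B'P) Cf.
  have xB' := subsetP (partitionS (pfam_in fF B'P) Cf) _ xC.
  by rewrite (blk_uniq pP BP B'P (subsetP CB _ xC) xB').
split; first by apply/bigcupP; exists B.
exact: partitionS (pfam_in fF BP) Cf.
Qed.

Lemma hfam_glue (f : fT) : f \in PF -> hfam (val (tosp (glue f))) = f.
Proof.
move=> fF; rewrite tospK; last exact: glue_partition.
apply/ffunP => B; rewrite ffunE; case: ifP => BP; first exact: rst_glue.
by rewrite pfam_out // BP.
Qed.

Lemma hfam_cond (s : setpart n) :
  (hfam (val s) \in PF) && (tosp (glue (hfam (val s))) == s) = refines (val s) P.
Proof.
have ps := valP s.
apply/andP/idP => [[fF _]|sP].
  apply/refinesP => C Cs; have [x xC] := nonempty_blk ps Cs.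
  have xP : x \in cover P by rewrite (cover_partition pP).
  set B := pblock P x; have BP : B \in P by apply: pblock_mem.
  have pf := pfam_in fF BP; rewrite ffunE BP in pf.
  have : x \in cover (rst (val s) B) by rewrite (cover_partition pf) mem_pblock.
  case/bigcupP => C'; rewrite mem_rst => /andP [C's C'B] xC'.
  by exists B => //; rewrite (blk_uniq ps Cs C's xC xC').
have gl : glue (hfam (val s)) = val s.
  apply/setP => C; apply/bigcupP/idP => [[B BP]|Cs].
    by rewrite ffunE BP mem_rst => /andP[].
  have [B BP CB] := (refinesP _ _ sP) _ Cs.
  by exists B => //; rewrite ffunE BP mem_rst Cs.
split; last by rewrite gl tosp_val.
apply/pfamilyP; split.
  by apply/subsetP => B; rewrite inE ffunE; case: ifP => // _; rewrite eqxx.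
by move=> B BP; rewrite ffunE BP; exact: rst_partition pP ps sP BP.
Qed.

Import GRing.Theory.
Local Open Scope ring_scope.
Lemma sum_fact (R : comNzRingType) (G : {set 'I_n} -> {set {set 'I_n}} -> R) :
  \sum_(s : setpart n | refines (val s) P) \prod_(B in P) G B (rst (val s) B) =
  \prod_(B in P) \sum_(Q | partition Q B) G B Q.
Proof.
rewrite (big_distr_big_dep set0) /=.
rewrite (reindex_onto (fun s : setpart n => hfam (val s)) (fun f => tosp (glue f))); last first.
  by move=> f fF; apply: hfam_glue.
apply: eq_big => s; first exact: esym (hfam_cond s).
move=> _; apply: eq_bigr => B BP; by rewrite ffunE BP.
Qed.

End Glue.

Section Mob.
Variable m : nat.
Implicit Types (S : {set {set 'I_m}}).
Definition rho S := [set xy : 'I_m * 'I_m | pblock S xy.1 == pblock S xy.2].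

Lemma pblock_rho S x : partition S setT -> pblock S x = [set y | (x, y) \in rho S].
Proof.
move=> pS; apply/setP => y; rewrite !inE /= eq_pblock ?(cover_partition pS) //.
exact: partition_trivIset pS.
Qed.

Lemma rho_sub S1 S2 : partition S1 setT -> partition S2 setT -> refines S1 S2 -> rho S1 \subset rho S2.
Proof.
move=> p1 p2 /refinesP r; apply/subsetP => -[x y]; rewrite !inE /= => /eqP E.
have x1 : x \in cover S1 by rewrite (cover_partition p1).
have y1 : y \in cover S1 by rewrite (cover_partition p1).
have [D DS CD] := r _ (pblock_mem x1).
have xD : x \in D by apply: (subsetP CD); rewrite mem_pblock.
have yD : y \in D by apply: (subsetP CD); rewrite E mem_pblock.
have t2 := partition_trivIset p2.
by rewrite (def_pblock t2 DS xD) (def_pblock t2 DS yD).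
Qed.

Lemma rho_sub_inv S1 S2 : partition S1 setT -> partition S2 setT -> rho S1 = rho S2 -> S1 \subset S2.
Proof.
move=> p1 p2 E; apply/subsetP => C CS.
have [x xC] := nonempty_blk p1 CS.
have -> : C = pblock S1 x by rewrite (def_pblock (partition_trivIset p1) CS xC).
rewrite pblock_rho // E -pblock_rho //; apply: pblock_mem; by rewrite (cover_partition p2).
Qed.

Lemma rho_lt S1 S2 : partition S1 setT -> partition S2 setT -> refines S1 S2 -> S1 != S2 ->
  (#|rho S1| < #|rho S2|)%N.
Proof.
move=> p1 p2 r ne; apply: proper_card; rewrite properEneq rho_sub // andbT.
apply: contra ne => /eqP E; rewrite eqEsubset !rho_sub_inv //.
Qed.

Variable K : fieldType.
Local Notation N := #|{: setpart m}|.

Lemma zeta_inj k (A : 'M[K]_(k, N)) : (A *m zeta_mx K m = 0)%R -> A = 0%R.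
Proof.
move=> AZ; apply/matrixP => i j; rewrite mxE; apply/eqP/negPn/negP => nz.
pose ms (l : 'I_N) := #|rho (val (enum_val l))|.
case: (@arg_minnP _ j (fun l => A i l != 0%R) ms nz) => l0 nz0 min0.
move/matrixP: AZ => /(_ i l0); rewrite !mxE (bigD1 l0) //= big1.
  by rewrite !mxE refines_refl GRing.mulr1 GRing.addr0; apply/eqP.
move=> l nl; rewrite !mxE; case: (boolP (refines _ _)) => r; last by rewrite GRing.mulr0.
have : A i l == 0%R.
  apply: contraTT r => nzl; have := min0 l nzl; rewrite leqNgt; apply: contra => r.
  apply: rho_lt; [exact: (valP (enum_val l)) | exact: (valP (enum_val l0)) | exact: r |].
  by apply/negP => /eqP /val_inj /enum_val_inj E; rewrite E eqxx in nl.
by move/eqP ->; rewrite GRing.mul0r.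
Qed.

Lemma zeta_unit : zeta_mx K m \in unitmx.
Proof.
rewrite -row_free_unit -kermx_eq0; apply/eqP; apply: zeta_inj; exact: mulmx_ker.
Qed.


Local Open Scope ring_scope.
Lemma mobius_sum (s t : setpart m) :
  (\sum_(r : setpart m) (refines (val s) (val r))%:R * mobius K r t = (s == t)%:R)%R.
Proof.
have := congr1 (fun M : 'M[K]_N => M (enum_rank s) (enum_rank t)) (mulmxV zeta_unit).
rewrite !mxE (inj_eq enum_rank_inj) => <-.
rewrite (reindex (@enum_rank _)) /=; last by apply: onW_bij; exact: enum_rank_bij.
by apply: eq_bigr => r _; rewrite !mxE !enum_rankK.
Qed.

Lemma mobius_uniq (x : setpart m -> K) (t : setpart m) :
  (forall s, \sum_(r : setpart m) (refines (val s) (val r))%:R * x r = (s == t)%:R)%R ->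
  forall r, x r = mobius K r t.
Proof.
move=> H r.
pose v : 'cV[K]_N := \col_(i < N) x (enum_val i).
pose e : 'cV[K]_N := \col_(i < N) ((enum_val i == t)%:R)%R.
have Zv : (zeta_mx K m *m v = e)%R.
  apply/matrixP => i j; rewrite !mxE -H (reindex (@enum_rank _)) /=; last first.
    by apply: onW_bij; exact: enum_rank_bij.
  by apply: eq_bigr => r' _; rewrite !mxE !enum_rankK.
have := congr1 (fun M : 'cV[K]_N => M (enum_rank r) 0) (mulKmx zeta_unit v).
rewrite Zv !mxE enum_rankK => <-.
rewrite /mobius (bigD1 (enum_rank t)) //= big1 ?GRing.addr0.
  by rewrite !mxE enum_rankK eqxx GRing.mulr1.
move=> l nl; rewrite !mxE; case: eqP => [E|]; last by rewrite GRing.mulr0.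
by move: nl; rewrite -E enum_valK eqxx.
Qed.

End Mob.

Section SumRel.
Import GRing.Theory.
Local Open Scope ring_scope.
Lemma sum_rel (R : nmodType) (n : nat) (B : {set 'I_n}) (H : setpart #|B| -> R) :
  \sum_(s : setpart #|B|) H s = \sum_(Q | partition Q B) H (tosp (relab B Q)).
Proof.
rewrite (reindex_onto (fun s : setpart #|B| => @unrel _ B (val s)) (fun Q => tosp (relab B Q))) /=; last first.
  move=> Q pQ; rewrite tospK ?unrel_rel //; [exact: partS | exact: rel_partition].
apply: eq_big => s; first by rewrite unrel_partition ?(valP s) // rel_unrel tosp_val eqxx.
by move=> _; rewrite rel_unrel tosp_val.
Qed.
End SumRel.

End PartsM.
Import PartsM.

Module MainM.
Set Implicit Arguments.
Unset Strict Implicit.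
Unset Printing Implicit Defensive.
Import GRing.Theory.
Local Open Scope ring_scope.

Lemma sub_map (T1 T2 : eqType) (g : T1 -> T2) t s :
  subseq t (map g s) -> exists2 s', subseq s' s & t = map g s'.
Proof.
elim: s t => [|x s IH] [|y t] //=; try by move=> _; exists [::]; rewrite ?sub0seq.
case: eqP => [-> /IH [s' ss' ->]|_ /IH [s' ss' E]].
  by exists (x :: s') => //=; rewrite eqxx.
exists s' => //; apply: subseq_trans ss' (subseq_cons _ _).
Qed.

Definition lbl n (Q : {set {set 'I_n}}) (j : 'I_n) : nat := index (pblock Q j) (enum Q).

Lemma lbl_eq n (Q : {set {set 'I_n}}) D j k : partition Q D -> j \in D -> k \in D ->
  (lbl Q j == lbl Q k) = (pblock Q j == pblock Q k).
Proof.
move=> pQ jD kD; apply/eqP/eqP => [E|E]; last by rewrite /lbl E.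
have m x : x \in D -> pblock Q x \in enum Q.
  by move=> xD; rewrite mem_enum pblock_mem // (cover_partition pQ).
exact: (@index_inj _ (pblock Q j) (enum Q) _ _ (m _ jD) (m _ kD) E).
Qed.

Lemma lbl_in n (Q : {set {set 'I_n}}) j : partition Q setT -> (lbl Q j < #|Q|)%N.
Proof.
move=> pQ; rewrite /lbl cardE index_mem mem_enum pblock_mem //.
by rewrite (cover_partition pQ).
Qed.

Lemma nc_ncseq n (P : {set {set 'I_n}}) : partition P setT -> noncrossing P ->
  ncseq [seq lbl P j | j <- enum 'I_n].
Proof.
move=> pP /forall_inP ncP a b ab; apply/negP => /sub_map [s' ss' E].
case: s' ss' E => [|i [|j [|k [|l [|? ?]]]]] // ss' [Ea Eb Ea' Eb'].
have so : sorted (fun x y : 'I_n => (x < y)%N) [:: i; j; k; l].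
  apply: (subseq_sorted _ ss'); first by move=> ? ? ? ; apply: ltn_trans.
  by have := iota_ltn_sorted 0 n; rewrite -val_enum_ord sorted_map.
move: so => /= /and4P [ij jk kl _].
have cov x : x \in cover P by rewrite (cover_partition pP).
have tP := partition_trivIset pP.
have Eik : pblock P i = pblock P k by apply/eqP; rewrite -(@lbl_eq _ P setT) ?inE // -Ea Ea'.
have Ejl : pblock P j = pblock P l by apply/eqP; rewrite -(@lbl_eq _ P setT) ?inE // -Eb Eb'.
have nij : pblock P i != pblock P j.
  by apply: contra ab => /eqP E; rewrite Ea Eb /lbl E.
move: (ncP _ (pblock_mem (cov i))) => /forall_inP /(_ _ (pblock_mem (cov j))).
rewrite nij /= => /forallP /(_ i) /forallP /(_ j) /forallP /(_ k) /forallP /(_ l).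
have ki : k \in pblock P i by rewrite Eik mem_pblock cov.
have lj : l \in pblock P j by rewrite Ejl mem_pblock cov.
by rewrite ij jk kl ki lj !mem_pblock !cov.
Qed.

Lemma prod_forall (R : comNzRingType) (I : finType) (D : {pred I}) (b : pred I) :
  ([forall i in D, b i])%:R = \prod_(i in D) (b i)%:R :> R.
Proof.
case: (boolP [forall i in D, b i]) => [/forall_inP H|/forall_inPn [i iD nb]].
  by rewrite big1 // => i /H ->.
by rewrite (bigD1 i) //= (negbTE nb) mul0r.
Qed.

Lemma one_block_setE m : (0 < m)%N -> one_block_set m = [set setT].
Proof. by case: m. Qed.

Lemma refines_one m (S : {set {set 'I_m}}) : (0 < m)%N -> refines S (one_block_set m).
Proof.
move=> m0; rewrite one_block_setE //; apply/refinesP => C _; exists setT; by rewrite ?set11 ?subsetT.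
Qed.

Lemma blk_card n (P : {set {set 'I_n}}) B : partition P setT -> B \in P -> (0 < #|B|)%N.
Proof. by move=> pP BP; rewrite card_gt0; apply: partition_neq0 pP BP. Qed.

Lemma prod_enumB (R : pzSemiRingType) n (B : {set 'I_n}) (G : 'I_n -> R) :
  \prod_(j <- enum B) G j = \prod_(i < n | i \in B) G i.
Proof. by rewrite -[RHS]big_filter [index_enum _]unlock. Qed.

Section Main.
Variables (C : fieldType) (A : algType C) (phi : {scalar A}).
Hypothesis phi1 : phi 1 = 1.
Variable F : free_exch_system phi.
Local Notation psi := (fes_psi F).

Definition wrd n (Q : {set {set 'I_n}}) (X : 'I_n -> A) (e : seq 'I_n) :=
  [seq (lbl Q j, X j) | j <- e].

Lemma phiF_wrd n (Q : {set {set 'I_n}}) X : phiF F Q X = psi (W F (wrd Q X (enum 'I_n))).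
Proof. by rewrite /phiF /W big_map enumT. Qed.

Lemma wrd_factor n (P S : {set {set 'I_n}}) X :
  partition P setT -> partition S setT -> refines S P -> noncrossing P ->
  psi (W F (wrd S X (enum 'I_n))) = \prod_(B in P) psi (W F (wrd S X (enum B))).
Proof.
move=> pP pS SP ncP.
have cov x : x \in cover P by rewrite (cover_partition pP).
have covS x : x \in cover S by rewrite (cover_partition pS).
have tP := partition_trivIset pP.
pose s := [seq ((lbl S j, lbl P j), X j) | j <- enum 'I_n].
have -> : wrd S X (enum 'I_n) = map (@dr _ _) s by rewrite /s -map_comp.
rewrite (groups phi1 F (cs := [seq index B (enum P) | B <- enum P])).
- rewrite big_map big_enum /=; apply: eq_bigr => B BP.
  rewrite /s filter_map -map_comp /wrd; congr (psi (W F (map _ _))).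
  transitivity [seq j <- enum 'I_n | j \in B]; last by rewrite enumT.
  apply: eq_filter => j /=.
  apply/eqP/idP => [E|jB]; last by rewrite /lbl (def_pblock tP BP jB).
  have := @index_inj _ B (enum P) _ _ _ _ E; rewrite !mem_enum pblock_mem // BP => /(_ isT isT) <-.
  by rewrite mem_pblock.
- move=> p q /mapP [j _ ->] /mapP [k _ ->] /= /eqP; rewrite (@lbl_eq _ S setT) ?inE //.
  move=> /eqP Ejk; have [D DP SD] := (refinesP _ _ SP) _ (pblock_mem (covS j)).
  have jD : j \in D by apply: (subsetP SD); rewrite mem_pblock.
  have kD : k \in D by apply: (subsetP SD); rewrite Ejk mem_pblock.
  by rewrite /lbl (def_pblock tP DP jD) (def_pblock tP DP kD).
- by rewrite /s -map_comp; exact: nc_ncseq.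
- rewrite map_inj_in_uniq ?enum_uniq // => x y xs ys.
  exact: (@index_inj _ x (enum P) _ _ xs ys).
- move=> c /mapP [p /mapP [j _ ->] ->] /=; apply/mapP; exists (pblock P j) => //.
  by rewrite mem_enum pblock_mem.
Qed.

Lemma wrd_rst n (P S : {set {set 'I_n}}) X B :
  partition P setT -> partition S setT -> refines S P -> B \in P ->
  psi (W F (wrd S X (enum B))) = psi (W F (wrd (rst S B) X (enum B))).
Proof.
move=> pP pS SP BP; apply: (pattern_lem phi1 F) => j k; rewrite !mem_enum => jB kB.
have pR := rst_partition pP pS SP BP.
by rewrite (@lbl_eq _ S setT) ?inE // (@lbl_eq _ _ B) // !(pblock_rst pP pS SP BP).
Qed.

Lemma wrd_rel n (B : {set 'I_n}) (Q : {set {set 'I_n}}) X : partition Q B ->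
  psi (W F (wrd Q X (enum B))) = phiF F (val (tosp (relab B Q))) (restr_block B X).
Proof.
move=> pQ; have pR := rel_partition pQ.
rewrite phiF_wrd tospK // -enum_ev /wrd -map_comp.
apply: (pattern_lem phi1 F) => j k _ _ /=.
rewrite (@lbl_eq _ _ B) ?evP // (@lbl_eq _ _ setT) ?inE //.
rewrite !eq_pblock ?(cover_partition pQ) ?(cover_partition pR) ?evP ?inE //;
  try exact: partition_trivIset pQ; try exact: partition_trivIset pR.
by rewrite pblock_rel // inE.
Qed.

Lemma claim1_block n (P : {set {set 'I_n}}) X B : partition P setT -> B \in P ->
  psi (W F (wrd P X (enum B))) = phi (\prod_(i < n | i \in B) X i).
Proof.
move=> pP BP; have tP := partition_trivIset pP.
have -> : wrd P X (enum B) = [seq (index B (enum P), X j) | j <- enum B].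
  by apply/eq_in_map => j; rewrite mem_enum => jB; rewrite /lbl (def_pblock tP BP jB).
rewrite /W big_map /= -rmorph_prod fes_restr; by rewrite prod_enumB.
Qed.

End Main.

Section MobFact.
Variable K : fieldType.

Lemma mobius_fact n (P t : setpart n) : refines (val t) (val P) ->
  mobius K t P = \prod_(B in val P) mobius K (tosp (relab B (rst (val t) B))) (one_block #|B|).
Proof.
move=> tP; have pP := valP P.
pose x (r : setpart n) := (refines (val r) (val P))%:R *
  \prod_(B in val P) mobius K (tosp (relab B (rst (val r) B))) (one_block #|B|).
suff <- : x t = mobius K t P by rewrite /x tP mul1r.
apply: mobius_uniq => s.
case: (boolP (refines (val s) (val P))) => sP; last first.
  have -> : (s == P) = false.
    by apply: contraNF sP => /eqP ->; apply: refines_refl.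
  rewrite big1 // => r _; rewrite /x.
  case: (boolP (refines (val s) (val r))) => sr; last by rewrite mul0r.
  case: (boolP (refines (val r) (val P))) => rP; last by rewrite mul0r mulr0.
  by move: sP; rewrite (refines_trans (valP s) sr rP).
rewrite (bigID (fun r : setpart n => refines (val r) (val P))) /=.
rewrite [X in _ + X]big1 ?addr0; last first.
  by move=> r /negbTE rP; rewrite /x rP mul0r mulr0.
rewrite (eq_bigr (fun r : setpart n => \prod_(B in val P)
    ((refines (rst (val s) B) (rst (val r) B))%:R *
     mobius K (tosp (relab B (rst (val r) B))) (one_block #|B|)))); last first.
  move=> r rP; rewrite /x rP mul1r (refines_rst pP (valP s) (valP r) sP rP) prod_forall.
  by rewrite -big_split.
rewrite (sum_fact pP (fun B Q => (refines (rst (val s) B) Q)%:R *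
     mobius K (tosp (relab B Q)) (one_block #|B|))).
have -> : (s == P) = (val s == val P) by [].
rewrite (eq_rst pP (valP s) sP) prod_forall; apply: eq_bigr => B BP.
have pSB := rst_partition pP (valP s) sP BP.
rewrite (eq_bigr (fun Q => (refines (val (tosp (relab B (rst (val s) B)))) (val (tosp (relab B Q))))%:R *
     mobius K (tosp (relab B Q)) (one_block #|B|))); last first.
  move=> Q pQ; rewrite !tospK ?rel_partition // refines_rel //; exact: partS.
rewrite -(sum_rel (fun s' => (refines (val (tosp (relab B (rst (val s) B)))) (val s'))%:R *
     mobius K s' (one_block #|B|))).
rewrite mobius_sum; congr (_%:R).
rewrite -val_eqE /= tospK ?rel_partition // one_block_setE ?(blk_card pP BP) //.
by rewrite rel_one //; exact: partS.
Qed.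

End MobFact.

Section Final.
Variables (C : fieldType) (A : algType C) (phi : {scalar A}).
Hypothesis phi1 : phi 1 = 1.
Variable F : free_exch_system phi.
Local Notation psi := (fes_psi F).

Lemma claim1 n (P : setpart n) X : noncrossing (val P) ->
  phiF F (val P) X = \prod_(B in val P) phi (\prod_(i < n | i \in B) X i).
Proof.
move=> ncP; have pP := valP P.
rewrite (phiF_wrd F) (wrd_factor phi1 F X pP pP (refines_refl _) ncP).
by apply: eq_bigr => B BP; apply: claim1_block.
Qed.

Lemma claim2 n (P : setpart n) X : noncrossing (val P) ->
  KF F P X = \prod_(B in val P) KFm F (restr_block B X).
Proof.
move=> ncP; have pP := valP P.
rewrite /KF (eq_bigr (fun s : setpart n => \prod_(B in val P)
    (psi (W F (wrd (rst (val s) B) X (enum B))) *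
     mobius C (tosp (relab B (rst (val s) B))) (one_block #|B|)))); last first.
  move=> s sP; rewrite big_split /= -mobius_fact //; congr (_ * _).
  rewrite (phiF_wrd F) (wrd_factor phi1 F X pP (valP s) sP ncP).
  by apply: eq_bigr => B BP; apply: (wrd_rst phi1 F X pP (valP s) sP BP).
rewrite (sum_fact pP (fun B Q => psi (W F (wrd Q X (enum B))) *
     mobius C (tosp (relab B Q)) (one_block #|B|))).
apply: eq_bigr => B BP.
rewrite /KFm /KF [RHS](eq_bigl xpredT); last by move=> s'; rewrite /= refines_one ?(blk_card pP BP).
rewrite (sum_rel (fun s' => phiF F (val s') (restr_block B X) * mobius C s' (one_block #|B|))).
by apply: eq_bigr => Q pQ; rewrite wrd_rel.
Qed.

End Final.

End MainM.
Import MainM.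

Unset Implicit Arguments.
Import GRing.Theory.
Local Open Scope ring_scope.

Theorem proposition4p3 (R : realType) (A : algType R[i]) (phi : {scalar A})
    (phi1 : phi 1 = 1) (F : free_exch_system phi)
    (n : nat) (P : setpart n) (X : 'I_n -> A) :
  noncrossing (val P) ->
  phiF F (val P) X = \prod_(B in val P) phi (\prod_(i < n | i \in B) X i)
  /\
  KF F P X = \prod_(B in val P) KFm F (restr_block B X).
Proof.
move=> ncP; split; [exact: claim1 | exact: claim2].
Qed.
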